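(* $\widehat{C}_{2,0} = \widehat{C}_{2,1} = 1$. Equivalently (for $m=1$, which implies the case $m=0$): for every $k \in \mathbb{N}$ and every function $F \colon \mathcal{K}_k^2 \to \mathbb{Z}$ with $|F(K_1) - F(K_2)| \le 1$ whenever $K_1, K_2 \in \mathcal{K}_k^2$ share a common edge ($\dim(K_1 \cap K_2) \ge 1$), there exist $p \in \mathbb{Z}$ and $\mathcal{S} \subset F^{-1}[\{p\}]$ such that $\bigcup \mathcal{S}$ connects some opposite faces of $I^2$.
   Context: $\mathcal{K}_k^n = \{\prod_{s=1}^n [\frac{i_s-1}{k}, \frac{i_s}{k}] : i_s \in \{1,\dots,k\}\}$ (cubes dividing $I^n=[0,1]^n$); $\dim$ is topological dimension; a set $S\subset I^n$ connects some opposite faces of $I^n$ if it is connected and meets both $\{z_i=0\}$ and $\{z_i=1\}$ for some $i$; $\mathbb{Z}^{n-1}$ has the $\ell^\infty$ norm; $P\subset\mathbb{Z}^{n-1}$ is $1$-connected if any two points are joined by a finite chain in $P$ with consecutive $\ell^\infty$-distances $\le 1$. $\widehat{C}_{n,m}$ is the least constant $C>0$ such that: for every $k\in\mathbb{N}$ and every $F\colon\mathcal{K}_k^n\to\mathbb{Z}^{n-1}$ with $\|F(K_1)-F(K_2)\|_\infty\le 1$ whenever $\dim(K_1\cap K_2)\ge m$, there exist a $1$-connected $P\subset\mathbb{Z}^{n-1}$ with $|P|\le C$ and $\mathcal{S}\subset F^{-1}[P]$ with $\bigcup\mathcal{S}$ connecting some opposite faces of $I^n$. *)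

(* Defs.v *)
From HB Require Import structures.
From mathcomp Require Import all_boot all_order all_algebra.
From mathcomp Require Import all_classical all_reals all_analysis.
From mathcomp Require Import Rstruct Rstruct_topology.
Set Implicit Arguments. Unset Strict Implicit. Unset Printing Implicit Defensive.
Import Order.TTheory GRing.Theory Num.Theory.
Local Open Scope classical_set_scope.
Local Open Scope ring_scope.

Notation RR := Rdefinitions.R.

(* A cube of K_k^n is indexed by i : 'I_n -> 'I_k (0-based): the cube
   prod_s [i_s/k, (i_s+1)/k]  (= [(i'_s - 1)/k, i'_s/k] with i'_s = i_s+1). *)
Definition cube_idx (n k : nat) := {ffun 'I_n -> 'I_k}.

Definition lo (k : nat) (a : nat) : RR := a%:R / k%:R.
Definition hi (k : nat) (a : nat) : RR := a.+1%:R / k%:R.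

Definition cube (n k : nat) (i : cube_idx n k) : set 'rV[RR]_n :=
  [set z | forall s : 'I_n, lo k (i s) <= z 0 s <= hi k (i s)].

(* The intersection
   of two axis-parallel closed boxes is the closed box
   prod_s [max lo, min hi]; it is empty (dimension -1) iff some side is
   reversed, and otherwise its (topological) dimension is the number of
   nondegenerate sides. *)
Definition inter_lo n k (i j : cube_idx n k) (s : 'I_n) : RR :=
  Num.max (lo k (i s)) (lo k (j s)).
Definition inter_hi n k (i j : cube_idx n k) (s : 'I_n) : RR :=
  Num.min (hi k (i s)) (hi k (j s)).

Definition inter_dim n k (i j : cube_idx n k) : int :=
  if [forall s, inter_lo i j s <= inter_hi i j s]
  then (#|[pred s | inter_lo i j s < inter_hi i j s]|)%:Z
  else (-1)%R.

Definition Zvec (n : nat) := 'rV[int]_(n.-1).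

Definition linf_le1 n (a b : Zvec n) : bool :=
  [forall t, `|a 0 t - b 0 t| <= 1].

(* P (a finite subset of Z^(n-1), given as a duplicate-free list) is
   1-connected: any two points are joined by a finite chain in P with
   consecutive l^oo distances <= 1. *)
Definition one_connected n (P : seq (Zvec n)) : Prop :=
  forall x y, x \in P -> y \in P ->
    exists c : seq (Zvec n),
      [/\ all (fun z => z \in P) c, path (@linf_le1 n) x c & last x c = y].

Definition cube_union n k (S : {set cube_idx n k}) : set 'rV[RR]_n :=
  [set z | exists2 K, K \in S & cube K z].

Definition connects_opposite_faces n (A : set 'rV[RR]_n) : Prop :=
  connected A /\
  exists s : 'I_n, (exists2 z, A z & z 0 s = 0) /\ (exists2 z, A z & z 0 s = 1).

Definition Chat_admissible (n m : nat) (C : RR) : Prop :=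
  forall (k : nat), (0 < k)%N ->
  forall F : cube_idx n k -> Zvec n,
    (forall K1 K2, (m%:Z <= inter_dim K1 K2) -> linf_le1 (F K1) (F K2)) ->
    exists (P : seq (Zvec n)) (S : {set cube_idx n k}),
      [/\ uniq P, one_connected P, (size P)%:R <= C,
          (forall K, K \in S -> F K \in P)
        & connects_opposite_faces (cube_union S)].

Definition is_Chat (n m : nat) (C : RR) : Prop :=
  0 < C /\ Chat_admissible n m C /\
  (forall C' : RR, 0 < C' -> Chat_admissible n m C' -> C <= C').

(* Main.v *)
Require Import Defs.
From mathcomp Require Import all_boot all_order all_algebra.
From mathcomp Require Import all_classical all_reals all_analysis.
From mathcomp Require Import Rstruct Rstruct_topology.
From mathcomp Require Import zify.
From Stdlib Require Import Classical.
Set Implicit Arguments. Unset Strict Implicit. Unset Printing Implicit Defensive.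



Definition cell := (nat * nat)%type.
Definition dn (a b : nat) := (a - b) + (b - a).
Definition adj4 (a b : cell) := dn a.1 b.1 + dn a.2 b.2 == 1.
Definition adj8 (a b : cell) := (dn a.1 b.1 <= 1) && (dn a.2 b.2 <= 1).

Lemma adj4C a b : adj4 a b = adj4 b a.
Proof. rewrite /adj4 /dn; apply/eqP/eqP; lia. Qed.
Lemma adj8C a b : adj8 a b = adj8 b a.
Proof. rewrite /adj8 /dn; apply/andP/andP; lia. Qed.

Definition reach (R : rel cell) (P : pred cell) (x y : cell) :=
  exists s, [/\ path R x s, all P (x :: s) & last x s = y].

Lemma reach_refl (R : rel cell) (P : pred cell) x : P x -> reach R P x x.
Proof. by move=> Px; exists [::]; rewrite /= Px. Qed.

Lemma reach_trans (R : rel cell) (P : pred cell) x y z : reach R P x y -> reach R P y z -> reach R P x z.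
Proof.
move=> [s [p1 a1 l1]] [t [p2 a2 l2]]; exists (s ++ t); split.
- by rewrite cat_path p1 l1 p2.
- by rewrite -cat_cons all_cat a1; move: a2 => /= /andP[].
- by rewrite last_cat l1.
Qed.

Lemma reach_step (R : rel cell) (P : pred cell) x y : P x -> P y -> R x y -> reach R P x y.
Proof. by move=> Px Py Rxy; exists [:: y]; rewrite /= Px Py Rxy. Qed.

Lemma path_restr (R : rel cell) (Q : pred cell) x s :
  path R x s -> all Q (x :: s) -> path (fun a b => [&& R a b, Q a & Q b]) x s.
Proof.
elim: s x => //= y s IH x /andP[Rxy ps] /and3P[Qx Qy Qs].
by rewrite Rxy Qx Qy /= IH //= Qy.
Qed.

Section Seg.
Variables (R : rel cell) (g : cell -> nat) (L H : nat).
Hypothesis Rg : forall a b, R a b -> dn (g a) (g b) <= 1.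

Lemma segC x s : path R x s -> all (fun c => L <= g c) (x :: s) -> g x <= H ->
  H <= g (last x s) ->
  exists s', [/\ path R x s', all (fun c => L <= g c <= H) (x :: s'),
     g (last x s') = H & {subset x :: s' <= x :: s}].
Proof.
elim: s x => [|y s IH] x /=.
  move=> _ /andP[Lx _] xH Hx; exists [::]; split => //=; first by rewrite Lx xH.
  by apply/eqP; rewrite eqn_leq xH Hx.
move=> /andP[Rxy ps] /andP[Lx als] xH Hl.
case: (ltnP (g x) H) => xH'.
  have Ry := Rg Rxy.
  have yH : g y <= H by move: Ry; rewrite /dn; lia.
  have [s' [p' a' l' sub']] := IH y ps als yH Hl.
  exists (y :: s'); split => //=.
  - by rewrite Rxy p'.
  - by apply/andP; split; [rewrite Lx xH | exact: a'].
  - move=> z; rewrite in_cons => /orP[/eqP->|zs]; first by rewrite in_cons eqxx.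
    by rewrite in_cons (sub' z zs) orbT.
exists [::]; split => //=; first by rewrite Lx xH.
  by apply/eqP; rewrite eqn_leq xH xH'.
by move=> z; rewrite mem_seq1 => /eqP->; rewrite in_cons eqxx.
Qed.

Lemma seg x s : path R x s -> has (fun c => g c <= L) (x :: s) ->
  H <= g (last x s) -> L <= H ->
  exists x' s', [/\ path R x' s', all (fun c => L <= g c <= H) (x' :: s'),
     g x' = L, g (last x' s') = H & {subset x' :: s' <= x :: s}].
Proof.
elim: s x => [|y s IH] x /=.
  move=> _; rewrite orbF => xL Hx LH; exists x, [::]; split => //=.
  - by rewrite andbT; apply/andP; split; lia.
  - lia.
  - lia.
move=> /andP[Rxy ps] /orP[xL|hs] Hl LH; last first.
  have [x' [s' [p' a' g' l' sub']]] := IH y ps hs Hl LH.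
  exists x', s'; split => // z /sub' zs; by rewrite in_cons zs orbT.
case hs: (has (fun c => g c <= L) (y :: s)).
  have [x' [s' [p' a' g' l' sub']]] := IH y ps hs Hl LH.
  exists x', s'; split => // z /sub' zs; by rewrite in_cons zs orbT.
move/negbT: hs; rewrite -all_predC => /allP alls.
have gy : L < g y by have := alls y (mem_head _ _); rewrite /= -ltnNge.
have gx : g x = L by have := Rg Rxy; rewrite /dn; lia.
have allL : all (fun c => L <= g c) (x :: y :: s).
  apply/allP => z; rewrite in_cons => /orP[/eqP->|zs]; first by rewrite gx.
  by have := alls z zs; rewrite /= -ltnNge => /ltnW.
have pxs : path R x (y :: s) by rewrite /= Rxy.
have gxH : g x <= H by rewrite gx.
have [s' [p' a' l' sub']] := segC pxs allL gxH Hl.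
by exists x, s'.
Qed.
End Seg.


Definition lt4 d := match d with 0 => 3 | 1 => 0 | 2 => 1 | _ => 2 end.
Definition rt4 d := match d with 0 => 1 | 1 => 2 | 2 => 3 | _ => 0 end.
Definition lok (l : seq bool) x y := [&& nth false l (x %% 4), nth false l (y %% 4),
  nth false l (4 + x %% 4) & ~~ nth false l (4 + y %% 4)].
Definition lstep (l : seq bool) d :=
  if lok l (d + 3) d then Some (lt4 d) else if lok l d d.+1 then Some d
  else if lok l d.+1 d.+2 then Some (rt4 d) else None.
Fixpoint allbits n : seq (seq bool) :=
  if n is n'.+1 then [seq b :: l | b <- [:: true; false], l <- allbits n'] else [:: [::]].
Lemma mem_allbits n l : size l = n -> l \in allbits n.
Proof.
elim: n l => [|n IH] [|b l] // [sz].
by apply/allpairsP; exists (b, l); split => //=; [case: b | exact: IH].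
Qed.
Definition inc l d := lok l (d + 3) (d + 2).
Definition chk_inj := all (fun l => all (fun d1 => all (fun d2 =>
  [&& inc l d1, inc l d2, lstep l d1 == lstep l d2 & lstep l d1 != None] ==> (d1 == d2))
  (iota 0 4)) (iota 0 4)) (allbits 8).
Definition chk_full := all (fun l => all (fun d =>
  [&& nth false l 0, nth false l 1, nth false l 2, nth false l 3 & inc l d] ==> (lstep l d != None))
  (iota 0 4)) (allbits 8).
Definition chk_chain := all (fun l => all (fun d =>
  [&& nth false l 0, nth false l 1, nth false l 2, nth false l 3, inc l d & (lstep l d == Some (rt4 d))] ==> nth false l (d %% 4) && nth false l (4 + d %% 4))
  (iota 0 4)) (allbits 8).
Definition chk_valid := all (fun l => all (fun d => all (fun d' =>
  (lstep l d == Some d') ==> (d' < 4) && lok l d' d'.+1)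
  (iota 0 4)) (iota 0 4)) (allbits 8).
Lemma chk_inj_ok : chk_inj. Proof. by vm_compute. Qed.
Lemma chk_full_ok : chk_full. Proof. by vm_compute. Qed.
Lemma chk_chain_ok : chk_chain. Proof. by vm_compute. Qed.
Lemma chk_valid_ok : chk_valid. Proof. by vm_compute. Qed.

Section Grid.
Variable N : nat.
Definition realc (c : cell) := (1 < c.1 <= N.+1) && (1 < c.2 <= N.+1).

Section Walk.
Variable A : pred cell.
Definition inExt (c : cell) := [&& 0 < c.1 <= N.+2, 0 < c.2 <= N.+2 &
  ~~ (((c.1 == 1) || (c.1 == N.+2)) && ((c.2 == 1) || (c.2 == N.+2)))].
Definition black (c : cell) := if realc c then A c else (c.2 == 1) || (c.2 == N.+2).
Definition corner (v : cell) (i : nat) : cell :=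
  match i %% 4 with 0 => (v.1.-1, v.2.-1) | 1 => (v.1.-1, v.2) | 2 => v | _ => (v.1, v.2.-1) end.
Definition ok (c c' : cell) := [&& inExt c, inExt c', black c & ~~ black c'].
Definition valid (e : cell * nat) := (e.2 < 4) && ok (corner e.1 e.2) (corner e.1 e.2.+1).
Definition mv (v : cell) (d : nat) : cell :=
  match d with 0 => (v.1.-1, v.2) | 1 => (v.1, v.2.+1) | 2 => (v.1.+1, v.2) | _ => (v.1, v.2.-1) end.
Definition cfg v := [:: inExt (corner v 0); inExt (corner v 1); inExt (corner v 2); inExt (corner v 3);
  black (corner v 0); black (corner v 1); black (corner v 2); black (corner v 3)].
Definition step (v : cell) (d : nat) : option (cell * nat) :=
  omap (fun d' => (v, d')) (lstep (cfg v) d).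
Definition nxt (e : cell * nat) := step (mv e.1 e.2) e.2.
Definition inc_ok v d := lok (cfg v) (d + 3) (d + 2).

Lemma cornerE v i : corner v i = corner v (i %% 4).
Proof. by rewrite /corner modn_mod. Qed.

Lemma cornerS v i : corner v (i %% 4).+1 = corner v i.+1.
Proof. by rewrite cornerE [RHS]cornerE -[(i %% 4).+1]addn1 -[i.+1]addn1 modnDml. Qed.

Lemma okE v x y : ok (corner v x) (corner v y) = lok (cfg v) x y.
Proof.
rewrite /lok /ok (cornerE v x) (cornerE v y).
have := ltn_pmod x (isT : 0 < 4); have := ltn_pmod y (isT : 0 < 4).
by case: (x %% 4) => [|[|[|[|//]]]]; case: (y %% 4) => [|[|[|[|//]]]].
Qed.

Lemma validE e : valid e = (e.2 < 4) && lok (cfg e.1) e.2 e.2.+1.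
Proof. by rewrite /valid okE. Qed.

Lemma incoming u d : d < 4 ->
  corner u d = corner (mv u d) (d + 3) /\ corner u d.+1 = corner (mv u d) (d + 2).
Proof. by case: u => a b; case: d => [|[|[|[|]]]]. Qed.

Lemma valid_inc e : valid e -> inc_ok (mv e.1 e.2) e.2.
Proof.
case: e => u d /andP[d4 okd]; rewrite /inc_ok /= -okE.
by have [<- <-] := incoming u d4.
Qed.

Lemma chk_at (P : pred (seq bool)) : all P (allbits 8) -> forall l, size l = 8 -> P l.
Proof. by move=> /allP H l sz; apply: H; apply: mem_allbits. Qed.

Lemma size_cfg v : size (cfg v) = 8. Proof. by []. Qed.

Lemma corner_bnd v i : [/\ v.1.-1 <= (corner v i).1 <= v.1 & v.2.-1 <= (corner v i).2 <= v.2].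
Proof.
rewrite cornerE; have := ltn_pmod i (isT : 0 < 4).
case: (i %% 4) => [|[|[|[|//]]]] _ /=; rewrite /corner /=; split; lia.
Qed.

Definition full v := [&& inExt (corner v 0), inExt (corner v 1), inExt (corner v 2) & inExt (corner v 3)].

Lemma nxt_inv e e' : nxt e = Some e' -> e'.1 = mv e.1 e.2 /\ lstep (cfg (mv e.1 e.2)) e.2 = Some e'.2.
Proof. by rewrite /nxt /step; case: (lstep _ _) => // d [<-]. Qed.

Lemma nxt_valid e e' : valid e -> nxt e = Some e' -> valid e'.
Proof.
case: e => u d; rewrite validE /= => /andP[d4 _] /nxt_inv [/= e1 e2].
case: e' e1 e2 => v d' /= -> e2; rewrite validE /=.
have := chk_at chk_valid_ok (size_cfg (mv u d)).
move/allP/(_ d); rewrite mem_iota add0n d4 => /(_ isT).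
have d'4 : d' < 4.
  by move: e2; rewrite /lstep; case: ifP => [_ [<-]|_]; [|case: ifP => [_ [<-]|_]; [|case: ifP => [_ [<-]|//]]];
     case: d d4 => [|[|[|[|]]]].
by move/allP/(_ d'); rewrite mem_iota add0n d'4 e2 eqxx => /(_ isT).
Qed.

Lemma inE_pos c : inExt c -> 0 < c.1 /\ 0 < c.2.
Proof. by rewrite /inExt => /and3P[/andP[-> _] /andP[-> _] _]. Qed.

Lemma mv_inj u1 u2 d : valid (u1, d) -> valid (u2, d) -> mv u1 d = mv u2 d -> u1 = u2.
Proof.
case: u1 u2 => a1 b1 [a2 b2]; rewrite /valid /ok /=.
case: d => [|[|[|[|//]]]] /= /andP[_ /andP[h1 _]] /andP[_ /andP[h2 _]];
  have [p1 q1] := inE_pos h1; have [p2 q2] := inE_pos h2; move: p1 q1 p2 q2 => /= p1 q1 p2 q2 [];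
  try by move=> -> ->.
- by move=> e1 ->; congr pair; lia.
- by move=> -> e1; congr pair; lia.
Qed.

Lemma nxt_inj e1 e2 e : valid e1 -> valid e2 -> nxt e1 = Some e -> nxt e2 = Some e -> e1 = e2.
Proof.
case: e1 => u1 d1; case: e2 => u2 d2 => v1 v2 n1 n2.
have i1 := valid_inc v1; have i2 := valid_inc v2.
move: (v1) (v2); rewrite !validE /= => /andP[d14 _] /andP[d24 _].
have [h1 s1] := nxt_inv n1; have [h2 s2] := nxt_inv n2.
have hh : mv u1 d1 = mv u2 d2 by rewrite -h1 -h2.
move: s1 s2 i1 i2 => /=; rewrite hh => s1 s2 i1 i2.
have := chk_at chk_inj_ok (size_cfg (mv u2 d2)).
move/allP/(_ d1); rewrite mem_iota add0n d14 => /(_ isT).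
move/allP/(_ d2); rewrite mem_iota add0n d24 => /(_ isT).
rewrite /inc_ok in i1 i2; rewrite /inc i1 i2 s1 s2 eqxx /= => /eqP ed; subst d2.
by rewrite (mv_inj v1 v2 hh).
Qed.

Hypothesis N0 : 0 < N.
Lemma black_nr c : ~~ realc c -> black c = (c.2 == 1) || (c.2 == N.+2).
Proof. by rewrite /black => /negbTE ->. Qed.
Ltac blk := rewrite black_nr /=; [lia | rewrite /realc /=; lia].
Definition vTL : cell := (2, 2).
Definition vTR : cell := (2, N.+2).
Definition vBR : cell := (N.+2, N.+2).

Lemma row_white c : inExt c -> (c.1 <= 1) || (N.+2 <= c.1) -> ~~ black c.
Proof.
move=> H1 H2; rewrite /black; case: ifP => H3; move: H1 H2 H3; rewrite /inExt /realc; lia.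
Qed.

Lemma col_black c : inExt c -> (c.2 <= 1) || (N.+2 <= c.2) -> black c.
Proof.
move=> H1 H2; rewrite /black; case: ifP => H3; move: H1 H2 H3; rewrite /inExt /realc; lia.
Qed.

Lemma cfg_TL : cfg vTL = [:: false; true; true; true; black (1,1); false; black (2,2); true].
Proof.
have e1 : inExt (1,1) = false by rewrite /inExt /=; lia.
have e2 : inExt (1,2) = true by rewrite /inExt /=; lia.
have e3 : inExt (2,2) = true by rewrite /inExt /=; lia.
have e4 : inExt (2,1) = true by rewrite /inExt /=; lia.
have e5 : black (1,2) = false by blk.
have e6 : black (2,1) = true by blk.
have -> : cfg vTL = [:: inExt (1,1); inExt (1,2); inExt (2,2); inExt (2,1);
  black (1,1); black (1,2); black (2,2); black (2,1)] by [].
by rewrite e1 e2 e3 e4 e5 e6.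
Qed.

Lemma cfg_TR : cfg vTR = [:: true; false; true; true; false; black (1,N.+2); true; black (2,N.+1)].
Proof.
have e1 : inExt (1,N.+1) = true by rewrite /inExt /=; lia.
have e2 : inExt (1,N.+2) = false by rewrite /inExt /=; lia.
have e3 : inExt (2,N.+2) = true by rewrite /inExt /=; lia.
have e4 : inExt (2,N.+1) = true by rewrite /inExt /=; lia.
have e5 : black (1,N.+1) = false by blk.
have e6 : black (2,N.+2) = true by blk.
have -> : cfg vTR = [:: inExt (1,N.+1); inExt (1,N.+2); inExt (2,N.+2); inExt (2,N.+1);
  black (1,N.+1); black (1,N.+2); black (2,N.+2); black (2,N.+1)] by [].
by rewrite e1 e2 e3 e4 e5 e6.
Qed.

Lemma cfg_BR : cfg vBR = [:: true; true; false; true; black (N.+1,N.+1); true; black (N.+2,N.+2); false].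
Proof.
have e1 : inExt (N.+1,N.+1) = true by rewrite /inExt /=; lia.
have e2 : inExt (N.+1,N.+2) = true by rewrite /inExt /=; lia.
have e3 : inExt (N.+2,N.+2) = false by rewrite /inExt /=; lia.
have e4 : inExt (N.+2,N.+1) = true by rewrite /inExt /=; lia.
have e5 : black (N.+1,N.+2) = true by blk.
have e6 : black (N.+2,N.+1) = false by blk.
have -> : cfg vBR = [:: inExt (N.+1,N.+1); inExt (N.+1,N.+2); inExt (N.+2,N.+2); inExt (N.+2,N.+1);
  black (N.+1,N.+1); black (N.+1,N.+2); black (N.+2,N.+2); black (N.+2,N.+1)] by [].
by rewrite e1 e2 e3 e4 e5 e6.
Qed.

Lemma no_in_TR d : d < 4 -> ~~ inc_ok vTR d.
Proof.
by rewrite /inc_ok cfg_TR; case: (black _); case: (black _); case: d => [|[|[|[|]]]].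
Qed.

Lemma TL_stop d : d < 4 -> lstep (cfg vTL) d = None.
Proof.
by rewrite cfg_TL; case: (black _); case: (black _); case: d => [|[|[|[|]]]].
Qed.

Lemma BR_stop d : d < 4 -> lstep (cfg vBR) d = None.
Proof.
by rewrite cfg_BR; case: (black _); case: (black _); case: d => [|[|[|[|]]]].
Qed.

Definition vBL : cell := (N.+2, 2).
Lemma cfg_BL : cfg vBL = [:: true; true; true; false; true; black (N.+1,2); false; black (N.+2,1)].
Proof.
have e1 : inExt (N.+1,1) = true by rewrite /inExt /=; lia.
have e2 : inExt (N.+1,2) = true by rewrite /inExt /=; lia.
have e3 : inExt (N.+2,2) = true by rewrite /inExt /=; lia.
have e4 : inExt (N.+2,1) = false by rewrite /inExt /=; lia.
have e5 : black (N.+1,1) = true by blk.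
have e6 : black (N.+2,2) = false by blk.
have -> : cfg vBL = [:: inExt (N.+1,1); inExt (N.+1,2); inExt (N.+2,2); inExt (N.+2,1);
  black (N.+1,1); black (N.+1,2); black (N.+2,2); black (N.+2,1)] by [].
by rewrite e1 e2 e3 e4 e5 e6.
Qed.

Lemma no_in_BL d : d < 4 -> ~~ inc_ok vBL d.
Proof.
by rewrite /inc_ok cfg_BL; case: (black _); case: (black _); case: d => [|[|[|[|]]]].
Qed.

Lemma inc_okE v d : inc_ok v d = ok (corner v (d + 3)) (corner v (d + 2)).
Proof. by rewrite okE. Qed.

Lemma inc_box v d : inc_ok v d -> (1 < v.1 <= N.+2) && (1 < v.2 <= N.+2).
Proof.
rewrite inc_okE /ok => /andP[i1 /andP[i2 /andP[b1 w2]]].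
have [/andP[r1 r1'] /andP[c1 c1']] := corner_bnd v (d + 3).
have [/andP[r2 r2'] /andP[c2 c2']] := corner_bnd v (d + 2).
have h1 : ~~ (((corner v (d + 3)).1 <= 1) || (N.+2 <= (corner v (d + 3)).1))
  by apply/negP => H; move: (row_white i1 H); rewrite b1.
have h2 : ~~ (((corner v (d + 2)).2 <= 1) || (N.+2 <= (corner v (d + 2)).2))
  by apply/negP => H; move: (col_black i2 H); rewrite (negbTE w2).
lia.
Qed.

Lemma box_nonfull v : (1 < v.1 <= N.+2) && (1 < v.2 <= N.+2) -> ~~ full v ->
  ((v.1 == 2) || (v.1 == N.+2)) && ((v.2 == 2) || (v.2 == N.+2)).
Proof. by case: v => a b; rewrite /full /inExt /=; lia. Qed.

Lemma nonfull_stop e : valid e -> ~~ full (mv e.1 e.2) ->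
  nxt e = None /\ (mv e.1 e.2 = vTL \/ mv e.1 e.2 = vBR).
Proof.
move=> ve nf; have ie := valid_inc ve.
have d4 : e.2 < 4 by move: ve; rewrite validE => /andP[].
have := box_nonfull (inc_box ie) nf.
rewrite /nxt /step; case: (mv e.1 e.2) ie => a b /= ie.
case/andP => /orP[] /eqP ea /orP[] /eqP eb; subst a b.
- by rewrite -/vTL TL_stop //; split => //; left.
- by rewrite -/vTR (negbTE (no_in_TR d4)) in ie.
- by rewrite -/vBL (negbTE (no_in_BL d4)) in ie.
- by rewrite -/vBR BR_stop //; split => //; right.
Qed.

Definition e0 : cell * nat := if black (2, N.+1) then (vTR, 3) else (vTR, 2).

Lemma valid_e0 : valid e0.
Proof. by rewrite /e0 validE; case: ifP => h; rewrite /= cfg_TR /lok /= h. Qed.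

Lemma not_to_e0 e : valid e -> nxt e <> Some e0.
Proof.
move=> ve /nxt_inv [h _]; have ie := valid_inc ve.
have d4 : e.2 < 4 by move: ve; rewrite validE => /andP[].
have : e0.1 = vTR by rewrite /e0; case: ifP.
by rewrite h => hv; rewrite hv (negbTE (no_in_TR d4)) in ie.
Qed.

Fixpoint walk n : option (cell * nat) :=
  if n is n'.+1 then (if walk n' is Some e then nxt e else None) else Some e0.

Lemma walk_valid n e : walk n = Some e -> valid e.
Proof.
elim: n e => [|n IH] e /=; first by case=> <-; exact: valid_e0.
by case E: (walk n) => [e'|//]; apply: nxt_valid; exact: IH.
Qed.

Lemma walk_inj i j e : walk i = Some e -> walk j = Some e -> i = j.
Proof.
elim: i j e => [|i IH] [|j] e //=.
- case=> <-; case E: (walk j) => [e'|//] h.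
  by have := not_to_e0 (walk_valid E); rewrite h.
- case E: (walk i) => [e'|//] h [h'].
  by have := not_to_e0 (walk_valid E); rewrite h h'.
- case E: (walk i) => [e1|//]; case F: (walk j) => [e2|//] h1 h2.
  have ee := nxt_inj (walk_valid E) (walk_valid F) h1 h2; subst e2.
  by rewrite (IH j e1 E F).
Qed.

Definition all_cells := [seq (a, b) | a <- iota 0 (N + 4), b <- iota 0 (N + 4)].
Definition all_edges := [seq (ab, d) | ab <- all_cells, d <- iota 0 4].

Lemma valid_mem e : valid e -> e \in all_edges.
Proof.
case: e => [[a b] d]; rewrite validE /= => /andP[d4]; rewrite -okE => /andP[i1 /andP[i2 _]].
have := corner_bnd (a, b) d; have := corner_bnd (a, b) d.+1.
move: i1 i2; rewrite /inExt => /andP[/andP[_ x1] /andP[/andP[_ y1] _]] /andP[/andP[_ x2] /andP[/andP[_ y2] _]].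
move=> [/andP[p1 _] /andP[q1 _]] [/andP[p2 _] /andP[q2 _]].
apply/allpairsP; exists ((a, b), d) => /=; split => //; last by clear -d4; move: d4; case: d => [|[|[|[|]]]].
apply/allpairsP; exists (a, b) => /=; split => //; rewrite mem_iota /=.
  by move: x1 p2 => /=; lia.
by move: y1 q2 => /=; lia.
Qed.

Lemma first_none n : walk n = None -> exists m e, walk m = Some e /\ nxt e = None.
Proof.
elim: n => [|n IH] //=; case E: (walk n) => [e|] h; first by exists n, e.
exact: IH.
Qed.

Lemma walk_ends : exists m e, walk m = Some e /\ nxt e = None.
Proof.
set M := size all_edges.
case H: (has (fun i => walk i == None) (iota 0 M.+1)).
  by case/hasP: H => i _ /eqP; apply: first_none.
move/negbT: H; rewrite -all_predC => /allP H.
have Hs i : i < M.+1 -> exists e, walk i = Some e.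
  move=> iM; have := H i; rewrite mem_iota add0n iM /= => /(_ isT).
  by case: (walk i) => // e _; exists e.
pose s := [seq odflt e0 (walk i) | i <- iota 0 M.+1].
have us : uniq s.
  rewrite map_inj_in_uniq ?iota_uniq // => i j; rewrite !mem_iota !add0n /= => iM jM.
  have [ei Ei] := Hs i iM; have [ej Ej] := Hs j jM; rewrite Ei Ej /= => eij.
  by subst ej; apply: walk_inj Ei Ej.
have ss : {subset s <= all_edges}.
  move=> x /mapP [i]; rewrite mem_iota add0n /= => iM ->.
  have [ei Ei] := Hs i iM; rewrite Ei /=; apply: valid_mem; exact: walk_valid Ei.
have := uniq_leq_size us ss; rewrite size_map size_iota -/M; lia.
Qed.

Definition lft (e : cell * nat) := corner e.1 e.2.
Definition rgt (e : cell * nat) := corner e.1 e.2.+1.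
Definition BE c := inExt c && black c.
Definition WE c := inExt c && ~~ black c.

Lemma valid_BW e : valid e -> BE (lft e) && WE (rgt e).
Proof. by rewrite /valid /ok /BE /WE => /andP[_ /and4P[-> -> -> ->]]. Qed.

Lemma adj8_corners v i j : adj8 (corner v i) (corner v j).
Proof.
have [/andP[a1 a2] /andP[b1 b2]] := corner_bnd v i.
have [/andP[c1 c2] /andP[d1 d2]] := corner_bnd v j.
rewrite /adj8 /dn; lia.
Qed.

Lemma adj4_corners v i : 0 < v.1.-1 -> 0 < v.2.-1 -> adj4 (corner v i) (corner v i.+1).
Proof.
move=> p1 p2; rewrite -cornerS (cornerE v i); have := ltn_pmod i (isT : 0 < 4).
case: (i %% 4) => [|[|[|[|//]]]] _; rewrite /corner /adj4 /dn /=; lia.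
Qed.

Lemma corner4 v d : corner v (d + 4) = corner v d.
Proof. by rewrite (cornerE v (d + 4)) modnDr -cornerE. Qed.

Lemma corner_lt4 v d : d < 4 -> corner v (lt4 d) = corner v (d + 3).
Proof. by case: d => [|[|[|[|]]]]. Qed.
Lemma corner_rt4 v d : d < 4 -> corner v (rt4 d) = corner v d.+1.
Proof. by case: d => [|[|[|[|]]]]. Qed.
Lemma nth_cfg v d : d < 4 ->
  nth false (cfg v) d = inExt (corner v d) /\ nth false (cfg v) (4 + d) = black (corner v d).
Proof. by case: d => [|[|[|[|]]]]. Qed.

Lemma step_chain e e' : valid e -> nxt e = Some e' ->
  reach adj4 BE (lft e) (lft e') /\ reach adj8 WE (rgt e) (rgt e').
Proof.
move=> ve ne; have ve' := nxt_valid ve ne.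
have /andP[be we] := valid_BW ve; have /andP[be' we'] := valid_BW ve'.
have fv : full (mv e.1 e.2).
  apply/negPn/negP => nf; have [h _] := nonfull_stop ve nf; by rewrite h in ne.
have [h1 h2] := nxt_inv ne.
case: e ve ne be we fv h1 h2 => u d ve ne; rewrite /lft /rgt /= => be we fv h1 h2.
have d4 : d < 4 by move: ve; rewrite validE => /andP[].
have [c1 c2] := incoming u d4.
set v := mv u d in c1 c2 fv h1 h2.
case: e' ve' ne be' we' h1 h2 => v' d' ve' ne; rewrite /lft /rgt /= => be' we' h1 h2; subst v'.
rewrite c1 c2 in be we *.
split; last by apply: reach_step => //; apply: adj8_corners.
have [p1 p2] : 0 < v.1.-1 /\ 0 < v.2.-1.
  by move: fv => /andP[/inE_pos [] + + _].
have hc : corner v (d + 3).+1 = corner v d by rewrite -addnS corner4.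
have ic : inc_ok v d by have := valid_inc ve.
have := h2; rewrite /lstep; case: ifP => _.
  case=> eq; subst d'.
  by rewrite corner_lt4 //; apply: reach_refl.
case: ifP => _.
  case=> eq; subst d'.
  by apply: reach_step => //; rewrite -hc; apply: adj4_corners.
case: ifP => // _ [eq]; subst d'.
have := chk_at chk_chain_ok (size_cfg v) => /allP/(_ d); rewrite mem_iota add0n d4 => /(_ isT).
rewrite modn_small // /inc -/(inc_ok v d) ic h2 eqxx.
have [e1 e2] := nth_cfg v d4; rewrite e1 e2.
move: fv; rewrite /full => /and4P[f0 f1 f2 f3]; rewrite [nth false (cfg v) 0]/= f0
  [nth false (cfg v) 1]/= f1 [nth false (cfg v) 2]/= f2 [nth false (cfg v) 3]/= f3 /= => /andP[id bd].
have bed : BE (corner v d) by rewrite /BE id bd.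
rewrite corner_rt4 // in be' *.
apply: (@reach_trans _ _ _ (corner v d)); apply: reach_step => //.
  by rewrite -hc; apply: adj4_corners.
by apply: adj4_corners.
Qed.

Lemma walk_chain n e : walk n = Some e ->
  reach adj4 BE (lft e0) (lft e) /\ reach adj8 WE (rgt e0) (rgt e).
Proof.
elim: n e => [|n IH] e /=.
  case=> <-; have /andP[b w] := valid_BW valid_e0.
  by split; apply: reach_refl.
case E: (walk n) => [e'|//] ne.
have [r1 r2] := IH e' E.
have [s1 s2] := step_chain (walk_valid E) ne.
by split; [apply: reach_trans r1 s1 | apply: reach_trans r2 s2].
Qed.

Lemma BE_real c : BE c -> 1 < c.2 <= N.+1 -> realc c && A c.
Proof.
rewrite /BE /black => /andP[ie]; case: ifP => // /negbT nr bc hc.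
by exfalso; move: ie bc hc nr; rewrite /inExt /realc; lia.
Qed.

Lemma WE_real c : WE c -> 1 < c.1 <= N.+1 -> realc c && ~~ A c.
Proof.
rewrite /WE /black => /andP[ie]; case: ifP => // /negbT nr bc hc.
by exfalso; move: ie bc hc nr; rewrite /inExt /realc; lia.
Qed.
End Walk.

Definition crossLR (R : rel cell) (P : pred cell) :=
  exists x s, [/\ path R x s, all (fun c => realc c && P c) (x :: s), x.2 = 2 & (last x s).2 = N.+1].
Definition crossTB (R : rel cell) (P : pred cell) :=
  exists x s, [/\ path R x s, all (fun c => realc c && P c) (x :: s), x.1 = 2 & (last x s).1 = N.+1].

Lemma path_rev (R : rel cell) x s : symmetric R -> path R x s ->
  exists y t, [/\ path R y t, y = last x s, last y t = x & (y :: t) =i (x :: s)].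
Proof.
move=> sR p; have h : last x s :: rev (belast x s) = rev (x :: s) by rewrite [in RHS]lastI rev_rcons.
exists (last x s), (rev (belast x s)); split => //.
- by rewrite rev_path; apply: sub_path p => a b; rewrite sR.
- by rewrite -[last (last x s) _]/(last x (last x s :: rev (belast x s))) h rev_cons last_rcons.
- by move=> z; rewrite h mem_rev.
Qed.

Theorem hexE (A : pred cell) : 0 < N -> crossLR adj4 A \/ crossTB adj8 (predC A).
Proof.
move=> N0.
have [m [e [we ne]]] := walk_ends A N0.
have ve := walk_valid N0 we.
have [rb rw] := walk_chain N0 we.
have d4 : e.2 < 4 by move: ve; rewrite validE => /andP[].
have [c1 c2] := incoming e.1 d4.
have nf : ~~ full (mv e.1 e.2).
  apply/negP => fv.
  have := chk_at chk_full_ok (size_cfg A (mv e.1 e.2)) => /allP/(_ e.2).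
  rewrite mem_iota add0n d4 => /(_ isT).
  have ie := valid_inc ve; rewrite /inc_ok in ie.
  move: (fv); rewrite /full => /and4P[f0 f1 f2 f3].
  rewrite /inc ie [nth false _ 0]/= f0 [nth false _ 1]/= f1 [nth false _ 2]/= f2 [nth false _ 3]/= f3 /=.
  by move: ne; rewrite /nxt /step; case: (lstep _ _).
have [_ [hTL|hBR]] := nonfull_stop N0 ve nf.
- left.
  have e0v : (e0 A).1 = vTR by rewrite /e0; case: ifP.
  move: rb => [s [ps alls ls]].
  have ps' := path_restr ps alls.
  set R' := (fun a b => [&& adj4 a b, BE A a & BE A b]) in ps'.
  have Rg : forall a b, R' a b -> dn (N.+3 - a.2) (N.+3 - b.2) <= 1.
    move=> a b /and3P[ab /andP[ia _] /andP[ib _]]; move: ab ia ib; rewrite /adj4 /inExt /dn; lia.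
  have hs : has (fun c => N.+3 - c.2 <= 2) (lft (e0 A) :: s).
    rewrite /= /lft e0v; have [_ /andP[h _]] := corner_bnd vTR (e0 A).2.
    by move: h; rewrite /vTR /= => h; apply/orP; left; lia.
  have hl : N.+1 <= N.+3 - (last (lft (e0 A)) s).2.
    rewrite ls /lft c1 hTL; have [_ /andP[_ h]] := corner_bnd vTL (e.2 + 3).
    by move: h; rewrite /vTL /= => h; lia.
  have [x' [s' [p' a' g' l' sub']]] := seg Rg ps' hs hl N0.
  have sR : symmetric R'.
    by move=> a b; rewrite /R' adj4C; case: (BE A a); case: (BE A b).
  have [y [t [pt ey lt mt]]] := path_rev sR p'.
  exists y, t; split.
  + by apply: sub_path pt => a b /andP[].
  + apply/allP => c; rewrite mt => cin.
    have cs := sub' c cin; have /allP := alls; move/(_ c cs) => bc.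
    have /allP := a'; move/(_ c cin) => /andP[h1 h2].
    apply: BE_real => //; move: h1 h2; clear; lia.
  + rewrite ey; move: l'; clear; lia.
  + rewrite lt; move: g'; clear; lia.
- right.
  have e0v : (e0 A).1 = vTR by rewrite /e0; case: ifP.
  move: rw => [s [ps alls ls]].
  have ps' := path_restr ps alls.
  set R' := (fun a b => [&& adj8 a b, WE A a & WE A b]) in ps'.
  have Rg : forall a b, R' a b -> dn a.1 b.1 <= 1.
    by move=> a b /and3P[/andP[ab _] _ _].
  have hs : has (fun c => c.1 <= 2) (rgt (e0 A) :: s).
    rewrite /= /rgt e0v; have [/andP[_ h] _] := corner_bnd vTR (e0 A).2.+1.
    by move: h; rewrite /vTR /= => h; apply/orP; left; lia.
  have hl : N.+1 <= (last (rgt (e0 A)) s).1.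
    rewrite ls /rgt c2 hBR; have [/andP[h _] _] := corner_bnd vBR (e.2 + 2).
    by move: h; rewrite /vBR /= => h; lia.
  have [x' [s' [p' a' g' l' sub']]] := seg Rg ps' hs hl N0.
  exists x', s'; split.
  + by apply: sub_path p' => a b /andP[].
  + apply/allP => c cin.
    have cs := sub' c cin; have /allP := alls; move/(_ c cs) => bc.
    have /allP := a'; move/(_ c cin) => /andP[h1 h2].
    apply: WE_real => //; move: h1 h2; clear; lia.
  + by [].
  + by [].
Qed.
End Grid.


Fixpoint cnt (f : cell -> cell -> nat) (x : cell) (s : seq cell) : nat :=
  if s is y :: s' then f x y + cnt f y s' else 0.

Lemma cnt_odd (S : pred cell) x s :
  odd (cnt (fun a b => S a != S b) x s) = (S x != S (last x s)).
Proof.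
elim: s x => [|y s IH] x /=; first by rewrite eqxx.
by rewrite oddD oddb IH; case: (S x); case: (S y); case: (S (last y s)).
Qed.

Lemma cnt_ext (R : rel cell) (T : pred cell) f g x s : path R x s -> all T (x :: s) ->
  (forall a b, R a b -> T a -> T b -> f a b = g a b) -> cnt f x s = cnt g x s.
Proof.
move=> p a H; elim: s x p a => [|y s IH] x //= /andP[Rxy p] /and3P[Tx Ty As].
by rewrite H // IH //= Ty.
Qed.

Lemma cnt0 x s : cnt (fun _ _ => 0) x s = 0.
Proof. by elim: s x => //= y s IH x; rewrite IH. Qed.

Lemma cnt_add f g x s : cnt (fun a b => f a b + g a b) x s = cnt f x s + cnt g x s.
Proof. elim: s x => //= y s IH x; rewrite IH; lia. Qed.

Definition hc (j i : nat) (a b : cell) : bool :=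
  [&& a.1 == b.1, a.1 < i & ((a.2 == j) && (b.2 == j.+1)) || ((a.2 == j.+1) && (b.2 == j))].

Lemma neq_cell (c z : cell) : (c != z) = ~~ ((c.1 == z.1) && (c.2 == z.2)).
Proof. by case: c z => a b [c d]. Qed.

Lemma adj4_cases (a b : cell) : adj4 a b -> (b.1 = a.1.+1 /\ b.2 = a.2) \/ (a.1 = b.1.+1 /\ b.2 = a.2) \/
  (b.1 = a.1 /\ b.2 = a.2.+1) \/ (b.1 = a.1 /\ a.2 = b.2.+1).
Proof. (rewrite /adj4 /dn; lia). Qed.
Lemma pv (a b : cell) i j : adj4 a b -> ~~ ((a.1 == i) && (a.2 == j)) ->
  ~~ ((b.1 == i) && (b.2 == j)) -> hc j i.+1 a b = hc j i a b.
Proof. case: a b => a1 a2 [b1 b2] /adj4_cases /= [[-> ->]|[[-> ->]|[[-> ->]|[-> ->]]]]; rewrite /hc /=.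
lia. lia. lia. lia. Qed.
Lemma ph (a b : cell) i j : adj4 a b -> ~~ ((a.1 == i) && (a.2 == j.+1)) ->
  ~~ ((b.1 == i) && (b.2 == j.+1)) ->
  nat_of_bool (((a.2 == j.+1) && (a.1 < i)) != ((b.2 == j.+1) && (b.1 < i))) = hc j i a b + hc j.+1 i a b.
Proof. case: a b => a1 a2 [b1 b2] /adj4_cases /= [[-> ->]|[[-> ->]|[[-> ->]|[-> ->]]]]; rewrite /hc /=.
lia. lia. lia. lia. Qed.
Lemma pe (a b : cell) M j : adj4 a b -> a.1 <= M -> b.1 <= M -> ~~ ((a.1 == M) && (a.2 == j)) ->
  ~~ ((b.1 == M) && (b.2 == j)) -> nat_of_bool ((a.2 <= j) != (b.2 <= j)) = hc j M a b.
Proof. case: a b => a1 a2 [b1 b2] /adj4_cases /= [[-> ->]|[[-> ->]|[[-> ->]|[-> ->]]]]; rewrite /hc /=.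
lia. lia. lia. lia. Qed.

Section X.
Variable N : nat.

Lemma crossX (P1 P2 : pred cell) : (forall c, P1 c -> P2 c -> False) ->
  crossLR N adj4 P1 -> crossTB N adj4 P2 -> False.
Proof.
move=> disj [x [s [ps as1 x2 l2]]] [y [t [pt at2 y1 lt1]]].
set x' : cell := (x.1, 1).
set s' := x :: rcons s ((last x s).1, N.+2).
have ps' : path adj4 x' s'.
  rewrite /s' /= rcons_path ps /adj4 /dn /= x2 l2; apply/andP; split; lia.
have hx : realc N x by move: as1 => /= /andP[/andP[]].
have hx1 : (x.1 < N.+2) && (1 < x.1) by move: hx; rewrite /realc; lia.
have hl1 : (1 < (last x s).1 <= N.+1).
  have : last x s \in x :: s by apply: mem_last.
  by move/allP: as1 => H /H /andP[]; rewrite /realc => /andP[].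
have rows : all (fun c => 1 < c.1 <= N.+1) (x' :: s').
  apply/allP => c; rewrite /s' /x' !in_cons mem_rcons in_cons => /or4P[/eqP->|/eqP->|/eqP->|cs] /=.
  - by move: hx1; lia.
  - by move: hx1; lia.
  - by [].
  - by move/allP: as1 => /(_ c); rewrite in_cons cs orbT => /(_ isT) /andP[]; rewrite /realc => /andP[].
have notpi : forall z, z \in y :: t -> all (fun c => c != z) (x' :: s').
  move=> z zin; move/allP: at2 => /(_ z zin) /andP[rz p2z].
  apply/allP => c; rewrite /s' /x' !in_cons mem_rcons in_cons => /or4P[/eqP->|/eqP->|/eqP->|cs].
  - by apply/eqP => ez; move: rz; rewrite -ez /realc /=; lia.
  - apply/eqP => ez; subst z; apply: (disj x) => //.
    by move: as1 => /= /andP[/andP[]].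
  - by apply/eqP => ez; move: rz; rewrite -ez /realc /=; lia.
  - apply/eqP => ez; subst c; apply: (disj z) => //.
    by move/allP: as1 => /(_ z); rewrite in_cons cs orbT => /(_ isT) /andP[].
pose n (z : cell) := cnt (fun a b => hc z.2 z.1 a b) x' s'.
have Tall : forall z, z \in y :: t -> all (fun c => c != z) (x' :: s') by [].
have vert : forall z w, z \in y :: t -> z.2 = w.2 -> w.1 = z.1.+1 -> n z = n w.
  move=> z w zin e2 e1; rewrite /n -e2 e1.
  apply: (@cnt_ext adj4 (fun c => c != z)) => //; first exact: notpi.
  by move=> a b ab; rewrite !neq_cell => ha hb; rewrite pv.
have horiz : forall z w, w \in y :: t -> z.1 = w.1 -> w.2 = z.2.+1 -> 1 < z.2 -> w.2 <= N.+1 ->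
    odd (n z) = odd (n w).
  move=> z w win e1 e2 hz hw.
  pose R (c : cell) := (c.2 == z.2.+1) && (c.1 < z.1).
  have : odd (cnt (fun a b => R a != R b) x' s') = false.
    rewrite cnt_odd /R /x' /s' /= last_rcons /=.
    have -> : (1 == z.2.+1) = false by apply/negbTE; lia.
    by have -> : (N.+2 == z.2.+1) = false by apply/negbTE; lia.
  rewrite (@cnt_ext adj4 (fun c => c != w) _ (fun a b => hc z.2 z.1 a b + hc z.2.+1 z.1 a b)) //.
  - rewrite cnt_add oddD /n e2 e1 => h; apply/eqP; move: h.
    by case: (odd _); case: (odd _).
  - exact: notpi.
  - by move=> a b ab; rewrite !neq_cell -e1 e2 => ha hb; rewrite /R ph.
have stepn : forall z w, z \in y :: t -> w \in y :: t -> adj4 z w -> odd (n z) = odd (n w).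
  move=> [z1 z2] [w1 w2] zin win zw.
  set z := (z1, z2) in zin zw *; set w := (w1, w2) in win zw *.
  have rz : realc N z by move/allP: at2 => /(_ z zin) /andP[].
  have rw : realc N w by move/allP: at2 => /(_ w win) /andP[].
  move: rz rw; rewrite /realc /= => rz rw.
  case/adj4_cases: zw => /= [[h1 h2]|[[h1 h2]|[[h1 h2]|[h1 h2]]]].
  - by rewrite (vert z w zin (esym h2) h1).
  - by rewrite (vert w z win h2 h1).
  - by apply: (horiz z w win (esym h1) h2) => /=; lia.
  - by apply/esym; apply: (horiz w z zin h1 h2) => /=; lia.
have ny : n y = 0.
  rewrite /n (@cnt_ext adj4 (fun c => 1 < c.1 <= N.+1) _ (fun _ _ => 0)) ?cnt0 //.
  by move=> a b _ /andP[ha _] _; rewrite /hc y1; lia.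
have nl : odd (n (last y t)).
  set l := last y t in lt1 *.
  have lin : l \in y :: t by apply: mem_last.
  have rl : realc N l by move/allP: at2 => /(_ l lin) /andP[].
  have hT : all (fun c => (c.1 <= N.+1) && (c != l)) (x' :: s').
    apply/allP => c cin; rewrite (allP (notpi l lin) c cin) andbT.
    by move/allP: rows => /(_ c cin) /andP[].
  rewrite /n lt1 -(@cnt_ext adj4 _ (fun a b => (a.2 <= l.2) != (b.2 <= l.2)) _ _ _ ps' hT).
  - rewrite cnt_odd /x' /s' /= last_rcons /=.
    move: rl; rewrite /realc => /andP[_ /andP[h1 h2]].
    have -> : (1 <= l.2) = true by lia.
    by have -> : (N.+2 <= l.2) = false by lia.
  - move=> a b ab /andP[ha1 ha2] /andP[hb1 hb2]; rewrite neq_cell lt1 in ha2; rewrite neq_cell lt1 in hb2.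
    exact: (pe ab ha1 hb1 ha2 hb2).
have gen : forall u r, path adj4 u r -> {subset u :: r <= y :: t} -> odd (n u) = odd (n (last u r)).
  move=> u r; elim: r u => [|v r IH] u //= /andP[uv pr] sub.
  rewrite (stepn u v) ?sub ?in_cons ?eqxx ?orbT //; apply: IH pr _ => c cin.
  by apply: sub; rewrite in_cons cin orbT.
have := gen y t pt (fun c h => h).
by rewrite ny nl.
Qed.
End X.


Import Order.TTheory GRing.Theory Num.Theory.
Section Main.
Variable N : nat.
Hypothesis N0 : (0 < N)%N.

Definition swapc (c : cell) : cell := (c.2, c.1).

Lemma path_swap (R : rel cell) x s : (forall a b, R (swapc a) (swapc b) = R a b) ->
  path R x s -> path R (swapc x) (map swapc s).
Proof. move=> HR; elim: s x => //= y s IH x /andP[h p]; by rewrite HR h IH. Qed.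

Lemma adj4_swap a b : adj4 (swapc a) (swapc b) = adj4 a b.
Proof. by rewrite /adj4 /= addnC. Qed.
Lemma adj8_swap a b : adj8 (swapc a) (swapc b) = adj8 a b.
Proof. by rewrite /adj8 /= andbC. Qed.
Lemma real_swap c : realc N (swapc c) = realc N c.
Proof. by rewrite /realc /= andbC. Qed.

Lemma LR_TB (R : rel cell) (P : pred cell) : (forall a b, R (swapc a) (swapc b) = R a b) ->
  crossLR N R (fun c => P (swapc c)) -> crossTB N R P.
Proof.
move=> HR [x [s [p a x2 l2]]]; exists (swapc x), (map swapc s); split.
- exact: path_swap.
- rewrite -map_cons all_map; apply: sub_all a => c /=.
  by rewrite real_swap.
- by [].
- by rewrite last_map.
Qed.

Lemma TB_LR (R : rel cell) (P : pred cell) : (forall a b, R (swapc a) (swapc b) = R a b) ->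
  crossTB N R (fun c => P (swapc c)) -> crossLR N R P.
Proof.
move=> HR [x [s [p a x2 l2]]]; exists (swapc x), (map swapc s); split.
- exact: path_swap.
- rewrite -map_cons all_map; apply: sub_all a => c /=.
  by rewrite real_swap.
- by [].
- by rewrite last_map.
Qed.

Lemma hexE' (A : pred cell) : crossTB N adj4 A \/ crossLR N adj8 (predC A).
Proof.
case: (hexE (fun c => A (swapc c)) N0) => h; [left|right].
- by apply: LR_TB h; exact: adj4_swap.
- by apply: TB_LR h; exact: adj8_swap.
Qed.

Lemma LR_mono R (P Q : pred cell) : (forall c, P c -> Q c) -> crossLR N R P -> crossLR N R Q.
Proof.
move=> PQ [x [s [p a x2 l2]]]; exists x, s; split => //.
by apply: sub_all a => c /andP[-> /PQ].
Qed.
Lemma TB_mono R (P Q : pred cell) : (forall c, P c -> Q c) -> crossTB N R P -> crossTB N R Q.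
Proof.
move=> PQ [x [s [p a x2 l2]]]; exists x, s; split => //.
by apply: sub_all a => c /andP[-> /PQ].
Qed.

Lemma row_gen m n : path adj4 (2, m) [seq (2, j) | j <- iota m.+1 n] /\
   last (2, m) [seq (2, j) | j <- iota m.+1 n] = (2, (m + n)%N).
Proof.
elim: n m => [|n IH] m /=; first by rewrite addn0.
have [p l] := IH m.+1; rewrite p l addSnnS; split => //.
by rewrite /adj4 /dn /=; apply/eqP; lia.
Qed.

Lemma row_cross (P : pred cell) : (forall c, realc N c -> c.1 = 2%N -> P c) -> crossLR N adj4 P.
Proof.
move=> HP; have [p l] := row_gen 2 N.-1.
exists (2%N, 2%N), [seq (2%N, j) | j <- iota 3 N.-1]; split => //.
- apply/allP => c; rewrite in_cons => /orP[/eqP->|/mapP[j]].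
    by rewrite HP // /realc /=; apply/andP; split; lia.
  rewrite mem_iota => hj ->; have rc : realc N (2%N, j) by rewrite /realc /=; apply/andP; split; lia.
  by rewrite rc HP.
- by rewrite l /=; lia.
Qed.

Local Open Scope ring_scope.
Variable f : cell -> int.
Hypothesis Lip : forall a b, realc N a -> realc N b -> adj4 a b -> `|f a - f b| <= 1.

Lemma side x s (t : int) : path adj4 x s -> all (fun c => realc N c && (f c != t)) (x :: s) ->
  (f x < t -> all (fun c => realc N c && (f c < t)) (x :: s)) /\
  (t < f x -> all (fun c => realc N c && (t < f c)) (x :: s)).
Proof.
elim: s x => [|y s IH] x /=.
  by move=> _ /andP[/andP[-> _] _]; split => ->.
move=> /andP[xy p] /andP[/andP[rx fx] al].
have [IH1 IH2] := IH y p al.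
move: al => /= /andP[/andP[ry fy] _].
have L := Lip rx ry xy.
split => h.
- by rewrite rx h /=; apply: IH1; move: L fy h; lia.
- by rewrite rx h /=; apply: IH2; move: L fy h; lia.
Qed.

Lemma sideLR (t : int) : crossLR N adj4 (fun c => f c != t) ->
  crossLR N adj4 (fun c => f c < t) \/ crossLR N adj4 (fun c => t < f c).
Proof.
move=> [x [s [p a x2 l2]]]; have [h1 h2] := side p a.
have : f x != t by move: a => /= /andP[/andP[]].
case: ltgtP => // h _; [left|right]; exists x, s; split => //; [exact: h1 | exact: h2].
Qed.

Lemma sideTB (t : int) : crossTB N adj4 (fun c => f c != t) ->
  crossTB N adj4 (fun c => f c < t) \/ crossTB N adj4 (fun c => t < f c).
Proof.
move=> [x [s [p a x2 l2]]]; have [h1 h2] := side p a.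
have : f x != t by move: a => /= /andP[/andP[]].
case: ltgtP => // h _; [left|right]; exists x, s; split => //; [exact: h1 | exact: h2].
Qed.

Theorem comb_main (t0 : int) : crossLR N adj4 (fun c => f c <= t0) ->
  ~ crossLR N adj4 (fun c => f c <= t0 - 1) ->
  crossLR N adj8 (fun c => f c == t0) \/ crossTB N adj8 (fun c => f c == t0).
Proof.
move=> Hlo Hno.
have noLT : ~ crossLR N adj4 (fun c => f c < t0).
  move=> h; apply: Hno; apply: LR_mono h => c; lia.
case: (hexE (fun c => f c != t0) N0) => [h|h]; last first.
  by right; apply: TB_mono h => c /=; rewrite negbK.
case: (sideLR h) => // Hhi.
case: (hexE' (fun c => f c != t0)) => [h'|h']; last first.
  by left; apply: LR_mono h' => c /=; rewrite negbK.
case: (sideTB h') => h2; exfalso.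
- apply: (@crossX N (fun c => t0 < f c) (fun c => f c < t0)) => // c; lia.
- apply: (@crossX N (fun c => f c <= t0) (fun c => t0 < f c)) => // c; lia.
Qed.

Definition Bd := (\sum_(i < N) \sum_(j < N) absz (f (i.+2, j.+2)))%N.

Lemma bound c : realc N c -> (absz (f c) <= Bd)%N.
Proof.
case: c => a b; rewrite /realc /= => /andP[/andP[a1 a2] /andP[b1 b2]].
have ia : (a - 2 < N)%N by lia.
have ib : (b - 2 < N)%N by lia.
rewrite /Bd (bigD1 (Ordinal ia)) //= (bigD1 (Ordinal ib)) //=.
have -> : (a - 2).+2 = a by lia.
have -> : (b - 2).+2 = b by lia.
by rewrite -addnA leq_addr.
Qed.

Definition Q t := crossLR N adj4 (fun c => f c <= t).

Lemma thresh : exists t0, Q t0 /\ ~ Q (t0 - 1).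
Proof.
set tl : int := - (Bd%:Z) - 1.
have notl : ~ Q tl.
  move=> [x [s [_ a _ _]]]; move: a => /= /andP[/andP[rx fx] _].
  have := bound rx; move: fx; rewrite /tl; lia.
have gen : forall n : nat, Q (tl + n%:Z) -> exists t0, Q t0 /\ ~ Q (t0 - 1).
  elim=> [|n IH]; first by rewrite addr0.
  case: (classic (Q (tl + n%:Z))) => [h _|h hq]; first exact: IH.
  exists (tl + n.+1%:Z); split => //.
  by have -> : tl + n.+1%:Z - 1 = tl + n%:Z by lia.
apply: (gen (2 * Bd).+1).
have -> : tl + (2 * Bd).+1%:Z = Bd%:Z by rewrite /tl; lia.
apply: row_cross => c rc _; have := bound rc; lia.
Qed.

Theorem comb : exists p : int, crossLR N adj8 (fun c => f c == p) \/ crossTB N adj8 (fun c => f c == p).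
Proof. have [t0 [h1 h2]] := thresh; exists t0; exact: comb_main. Qed.
End Main.


Import Order.TTheory GRing.Theory Num.Theory.
Import numFieldNormedType.Exports.
Local Open Scope classical_set_scope.
Local Open Scope ring_scope.

Definition o1 : 'I_2 := Ordinal (isT : (1 < 2)%N).
Lemma I2 (s : 'I_2) : s = ord0 \/ s = o1.
Proof. by case: s => [[|[|//]]] p; [left|right]; apply/val_inj. Qed.

Definition ee0 : 'rV[RR]_2 := \row_(j < 2) (if j == ord0 then 1 else 0).
Definition ee1 : 'rV[RR]_2 := \row_(j < 2) (if j == ord0 then 0 else 1).
Definition phi (x y : RR) : 'rV[RR]_2 := x *: ee0 + y *: ee1.

Lemma phiE x y s : phi x y ord0 s = if s == ord0 then x else y.
Proof. by rewrite !mxE; case: (s == ord0); rewrite ?mulr1 ?mulr0 ?addr0 ?add0r. Qed.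

Lemma phi_cont1 y : continuous (fun x => phi x y).
Proof.
move=> x.
have h1 : {for x, continuous (fun x0 : RR => x0 *: ee0)} by apply: scalel_continuous.
have h2 : {for x, continuous (fun _ : RR => y *: ee1)} by apply: cst_continuous.
exact: (continuousD h1 h2).
Qed.

Lemma phi_cont2 x : continuous (fun y => phi x y).
Proof.
move=> y.
have h1 : {for y, continuous (fun _ : RR => x *: ee0)} by apply: cst_continuous.
have h2 : {for y, continuous (fun y0 : RR => y0 *: ee1)} by apply: scalel_continuous.
exact: (continuousD h1 h2).
Qed.

Section Topo.
Variable k : nat.
Hypothesis k0 : (0 < k)%N.

Lemma le_div (a b : nat) : (a%:R / k%:R <= b%:R / k%:R :> RR) = (a <= b)%N.
Proof. by rewrite ler_pM2r ?invr_gt0 ?ltr0n // ler_nat. Qed.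
Lemma lt_div (a b : nat) : (a%:R / k%:R < b%:R / k%:R :> RR) = (a < b)%N.
Proof. by rewrite ltr_pM2r ?invr_gt0 ?ltr0n // ltr_nat. Qed.

Lemma cube_conn (i : cube_idx 2 k) : connected (cube i).
Proof.
set a0 := lo k (i ord0); set b0 := hi k (i ord0).
set a1 := lo k (i o1); set b1 := hi k (i o1).
have ab0 : a0 <= b0 by rewrite /a0 /b0 /lo /hi le_div.
have ab1 : a1 <= b1 by rewrite /a1 /b1 /lo /hi le_div.
set H := (fun x => phi x a1) @` `[a0, b0].
set V := fun x => (fun y => phi x y) @` `[a1, b1].
have -> : cube i = \bigcup_(x in `[a0, b0]) (H `|` V x).
  apply/seteqP; split => z.
  - move=> hz; exists (z ord0 ord0).
      by have := hz ord0; rewrite /= in_itv /=.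
    right; exists (z ord0 o1); first by have := hz o1; rewrite /= in_itv /=.
    apply/rowP => s; rewrite phiE; case: (I2 s) => -> //.
  - move=> [x hx [[x' hx' <-] | [y hy <-]]] s; rewrite phiE; case: (I2 s) => -> /=.
    + by move: hx'; rewrite /= in_itv.
    + by rewrite lexx ab1.
    + by move: hx; rewrite /= in_itv.
    + by move: hy; rewrite /= in_itv.
apply: bigcup_connected.
  exists (phi a0 a1) => x hx /=; left; exists a0 => //.
  by rewrite /= in_itv /= lexx ab0.
move=> x hx; apply: connectedU.
- exists (phi x a1); split; [exists x => // | exists a1 => //].
  by rewrite /= in_itv /= lexx ab1.
- apply: connected_continuous_connected; first exact: segment_connected.
  by apply: continuous_subspaceT; apply: phi_cont1.
- apply: connected_continuous_connected; first exact: segment_connected.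
  by apply: continuous_subspaceT; apply: phi_cont2.
Qed.
End Topo.

Section Fin.
Variable k' : nat.
Local Notation k := k'.+1.

Definition mk (c : cell) : cube_idx 2 k :=
  [ffun s : 'I_2 => inord (if s == ord0 then (c.1 - 2)%N else (c.2 - 2)%N)].

Lemma mkE c : realc k c -> (mk c ord0 : nat) = (c.1 - 2)%N /\ (mk c o1 : nat) = (c.2 - 2)%N.
Proof.
rewrite /realc => /andP[/andP[a1 a2] /andP[b1 b2]].
by rewrite !ffunE /= !inordK //; lia.
Qed.

Lemma coordI (u w : nat) : (dn u w <= 1)%N ->
  (Num.max (lo k u) (lo k w) <= Num.min (hi k u) (hi k w)) /\
  ((Num.max (lo k u) (lo k w) < Num.min (hi k u) (hi k w)) = (u == w)).
Proof.
move=> h; rewrite ge_max gt_max !le_min !lt_min /lo /hi !le_div // !lt_div //.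
by split; rewrite /dn in h; lia.
Qed.

Lemma interdim_adj4 a b : realc k a -> realc k b -> adj4 a b -> inter_dim (mk a) (mk b) = 1.
Proof.
move=> ra rb ab; have [a0 a1] := mkE ra; have [b0 b1] := mkE rb.
have h0 : (dn (mk a ord0) (mk b ord0) <= 1)%N.
  by rewrite a0 b0; move: ra rb ab; rewrite /realc /adj4 /dn; lia.
have h1 : (dn (mk a o1) (mk b o1) <= 1)%N.
  by rewrite a1 b1; move: ra rb ab; rewrite /realc /adj4 /dn; lia.
rewrite /inter_dim /inter_lo /inter_hi.
have -> : [forall s, Num.max (lo k (mk a s)) (lo k (mk b s)) <= Num.min (hi k (mk a s)) (hi k (mk b s))].
  apply/forallP => s; case: (I2 s) => ->; [exact: (coordI h0).1 | exact: (coordI h1).1].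
set s0 : 'I_2 := if a.1 == b.1 then ord0 else o1.
rewrite (@eq_card _ _ (pred1 s0)) ?card1 // => s /=.
rewrite !inE /= /s0.
have n01 : (ord0 == o1 :> 'I_2) = false by [].
have n10 : (o1 == ord0 :> 'I_2) = false by [].
case: (I2 s) => ->.
- rewrite (coordI h0).2 a0 b0; move: ra rb ab; rewrite /realc /adj4 /dn.
  case: ifP => e; rewrite ?eqxx ?n01 => *; lia.
- rewrite (coordI h1).2 a1 b1; move: ra rb ab; rewrite /realc /adj4 /dn.
  case: ifP => e; rewrite ?eqxx ?n10 => *; lia.
Qed.

Lemma cube_pt (i : cube_idx 2 k) (s : 'I_2) (v : RR) : lo k (i s) <= v <= hi k (i s) ->
  exists2 z, cube i z & z ord0 s = v.
Proof.
move=> hv; exists (\row_(j < 2) if j == s then v else lo k (i j)); last by rewrite mxE eqxx.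
move=> j; rewrite mxE; case: eqP => [->//|_].
by rewrite lexx /= /lo /hi le_div // leqnSn.
Qed.

Lemma inter_adj8 a b : realc k a -> realc k b -> adj8 a b ->
  cube (mk a) `&` cube (mk b) !=set0.
Proof.
move=> ra rb ab; have [a0 a1] := mkE ra; have [b0 b1] := mkE rb.
pose z : 'rV[RR]_2 := \row_(j < 2) lo k (maxn (mk a j) (mk b j)).
have key : forall j, (dn (mk a j) (mk b j) <= 1)%N.
  move=> j; case: (I2 j) => ->; [rewrite a0 b0 | rewrite a1 b1];
  move: ra rb ab; rewrite /realc /adj8 /dn; lia.
exists z; split => j; rewrite mxE /lo /hi !le_div //; have := key j; rewrite /dn; lia.
Qed.

Lemma union_conn x s : path adj8 x s -> all (realc k) (x :: s) ->
  connected [set z | exists2 c, c \in x :: s & cube (mk c) z].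
Proof.
elim: s x => [|y s IH] x.
  move=> _ _; have -> : [set z | exists2 c, c \in [:: x] & cube (mk c) z] = cube (mk x).
    apply/seteqP; split => z /=; first by move=> [c]; rewrite mem_seq1 => /eqP->.
    by move=> h; exists x => //; rewrite mem_seq1.
  exact: cube_conn.
move=> /= /andP[xy p] /andP[rx al].
have -> : [set z | exists2 c, c \in [:: x, y & s] & cube (mk c) z] =
    cube (mk x) `|` [set z | exists2 c, c \in y :: s & cube (mk c) z].
  apply/seteqP; split => z /=.
  - by move=> [c]; rewrite in_cons => /orP[/eqP->|cin h]; [left|right; exists c].
  - by move=> [h|[c cin h]]; [exists x; rewrite ?mem_head | exists c; rewrite // in_cons cin orbT].
apply: connectedU.
- have [z [h1 h2]] := inter_adj8 rx (proj1 (andP al)) xy.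
  by exists z; split => //; exists y; rewrite ?mem_head.
- exact: cube_conn.
- exact: IH.
Qed.

Lemma face0 c s : ((mk c s : nat) = 0)%N -> exists2 z, cube (mk c) z & z ord0 s = 0.
Proof.
move=> e; apply: cube_pt; rewrite e /lo /hi mul0r lexx /=.
by apply: divr_ge0; apply: ler0n.
Qed.

Lemma face1 c s : ((mk c s : nat) = k')%N -> exists2 z, cube (mk c) z & z ord0 s = 1.
Proof.
move=> e; apply: cube_pt; rewrite e.
have e1 : hi k k' = 1 by rewrite /hi divff // pnatr_eq0.
by rewrite -e1 lexx andbT /lo /hi le_div.
Qed.

Definition Sof (L : seq cell) : {set cube_idx 2 k} := [set K | has (fun c => mk c == K) L]%SET.

Lemma cube_unionE (L : seq cell) :
  cube_union (Sof L) = [set z | exists2 c, c \in L & cube (mk c) z].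
Proof.
apply/seteqP; split => z /=.
- by move=> [K]; rewrite inE => /hasP[c cin /eqP <-] h; exists c.
- by move=> [c cin h]; exists (mk c) => //; rewrite inE; apply/hasP; exists c.
Qed.
End Fin.

Lemma adm (m : nat) : (m <= 1)%N -> Chat_admissible 2 m 1.
Proof.
move=> m1 k k0 F HF.
case: k k0 F HF => [//|k'] _ F HF.
pose f (c : cell) : int := F (mk k' c) ord0 ord0.
have Lip : forall a b, realc k'.+1 a -> realc k'.+1 b -> adj4 a b -> `|f a - f b| <= 1.
  move=> a b ra rb ab; have := HF (mk k' a) (mk k' b).
  rewrite (interdim_adj4 ra rb ab) lez_nat => /(_ m1) /forallP /(_ ord0).
  by [].
have [p hp] := comb (isT : (0 < k'.+1)%N) Lip.
pose v : Zvec 2 := \row_(j < 1) p.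
have Fv : forall c, f c == p -> F (mk k' c) = v.
  move=> c /eqP fc; apply/rowP => j; rewrite (ord1 j) mxE -fc //.
have common : forall x s, path adj8 x s -> all (fun c => realc k'.+1 c && (f c == p)) (x :: s) ->
  [/\ uniq [:: v], one_connected [:: v], (size [:: v])%:R <= (1 : RR),
      (forall K, K \in Sof k' (x :: s) -> F K \in [:: v])
    & connected (cube_union (Sof k' (x :: s)))].
  move=> x s px al.
  have oc : one_connected [:: v].
    move=> a b; rewrite !mem_seq1 => /eqP-> /eqP->; exists [::]; split => //.
  have sz : (size [:: v])%:R <= (1 : RR) by rewrite /= lexx.
  have mm : forall K, K \in Sof k' (x :: s) -> F K \in [:: v].
    move=> K; rewrite inE => /hasP[c cin /eqP <-].
    have /andP[_ fc] := allP al c cin.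
    by rewrite (Fv c fc) mem_seq1.
  split => //.
  rewrite cube_unionE; apply: union_conn => //.
  by apply: sub_all al => c /andP[].
case: hp => [[x [s [px al x2 l2]]] | [x [s [px al x1 l1]]]].
- have [u1 u2 u3 u4 u5] := common x s px al.
  exists ([:: v]); exists (Sof k' (x :: s)); split => //.
  split => //; exists o1; split.
  + have rx : realc k'.+1 x by have /andP[] := allP al x (mem_head _ _).
    have [_ e] := mkE rx.
    have e' : (mk k' x o1 : nat) = 0%N by rewrite e x2.
    have [z hz hz0] := face0 e'.
    by exists z => //; rewrite cube_unionE; exists x; rewrite ?mem_head.
  + have lin : last x s \in x :: s by apply: mem_last.
    have rl : realc k'.+1 (last x s) by have /andP[] := allP al _ lin.
    have [_ e] := mkE rl.
    have e' : (mk k' (last x s) o1 : nat) = k' by rewrite e l2; lia.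
    have [z hz hz0] := face1 e'.
    by exists z => //; rewrite cube_unionE; exists (last x s).
- have [u1 u2 u3 u4 u5] := common x s px al.
  exists ([:: v]); exists (Sof k' (x :: s)); split => //.
  split => //; exists ord0; split.
  + have rx : realc k'.+1 x by have /andP[] := allP al x (mem_head _ _).
    have [e _] := mkE rx.
    have e' : (mk k' x ord0 : nat) = 0%N by rewrite e x1.
    have [z hz hz0] := face0 e'.
    by exists z => //; rewrite cube_unionE; exists x; rewrite ?mem_head.
  + have lin : last x s \in x :: s by apply: mem_last.
    have rl : realc k'.+1 (last x s) by have /andP[] := allP al _ lin.
    have [e _] := mkE rl.
    have e' : (mk k' (last x s) ord0 : nat) = k' by rewrite e l1; lia.
    have [z hz hz0] := face1 e'.
    by exists z => //; rewrite cube_unionE; exists (last x s).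
Qed.

Lemma minimal (m : nat) (C' : RR) : 0 < C' -> Chat_admissible 2 m C' -> 1 <= C'.
Proof.
move=> C0 HC.
have hyp : forall K1 K2 : cube_idx 2 1, m%:Z <= inter_dim K1 K2 ->
    linf_le1 ((fun _ => 0 : Zvec 2) K1) ((fun _ => 0 : Zvec 2) K2).
  by move=> *; apply/forallP => t; rewrite !mxE subrr normr0.
have [P [S [_ _ szP memS [_ [s [[z [K KS _] _] _]]]]]] := HC 1%N isT _ hyp.
have := memS K KS; case: P szP {memS} => // v P szP _.
by apply: le_trans szP; rewrite /= ler1n.
Qed.

Theorem proposition5p1 : is_Chat 2 0 1 /\ is_Chat 2 1 1.
Proof.
split.
- split; first exact: ltr01.
  split; first by apply: adm.
  by move=> C' C0 HC; apply: minimal HC.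
- split; first exact: ltr01.
  split; first by apply: adm.
  by move=> C' C0 HC; apply: minimal HC.
Qed.
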